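(* Let $M\ge 3$ be an integer (the number of telescopes), let $0<\epsilon<1$, and let the coherence parameters $g_{XY}=a_{XY}+ib_{XY}\in\mathbb{C}$ ($X<Y$) be such that the state $\rho$ below is a density operator. Fix a pair of telescopes $X\neq Y$ and a phase $\delta\in\mathbb{R}$ with $|\mathrm{Re}(g_{XY}e^{-i\delta})|<1$. For any number of rounds $D\ge 1$ and any strengths $\tau_1,\dots,\tau_D\in[0,1]$ with $\gamma_D>0$, the Fisher information matrices (for the two real parameters $(a_{XY},b_{XY})$) of the quantum-randomness scheme and of the classical-randomness scheme satisfy $$F^{qr}_{XY}=\binom{M}{2}\gamma_D\,F^{cr}_{XY},\qquad\text{hence}\qquad \frac{\Vert F^{qr}_{XY}\Vert}{\Vert F^{cr}_{XY}\Vert}=\binom{M}{2}\gamma_D .$$ Moreover, with the strengths $\tau_1,\dots,\tau_D$ chosen optimally, $\gamma_D\to\frac{1}{M-1}$ as $D\to\infty$, so that the ratio tends to $\frac{1}{M-1}\binom{M}{2}=\frac{M}{2}$.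
   Context: Each telescope $j\in\{1,\dots,M\}$ holds one optical mode, truncated to a qubit with basis $|0\rangle_j$ (vacuum) and $|1\rangle_j$ (one photon). The received stellar state (to first order in the mean photon number $\epsilon$) is $\rho=(1-\epsilon)|0\cdots0\rangle\langle0\cdots0|+\epsilon\rho^{(1)}$, where $\rho^{(1)}$ is supported on the single-photon states $|e_j\rangle$ (photon at telescope $j$, vacuum elsewhere) with $\langle e_j|\rho^{(1)}|e_j\rangle=1/M$, $\langle e_j|\rho^{(1)}|e_k\rangle=g_{jk}/M$ for $j<k$, and $\langle e_k|\rho^{(1)}|e_j\rangle=g_{jk}^*/M$. For the pair $X,Y$, write $|10\rangle_{XY}$ for one photon at $X$ and none at $Y$, etc., and let $|\delta_\pm\rangle_{XY}=\frac{1}{\sqrt2}(|01\rangle\pm e^{i\delta}|10\rangle)_{XY}$; $\overline{XY}$ denotes the remaining $M-2$ telescopes. The Fisher information matrix of a family of outcome probabilities $p(x|\mathbf c)$ with respect to real parameters $\mathbf c=(c_1,c_2)$ is $F_{ij}=\sum_x \frac{1}{p(x|\mathbf c)}\partial_{c_i}p(x|\mathbf c)\,\partial_{c_j}p(x|\mathbf c)$, with $p(x|\mathbf c)=\mathrm{tr}(E_x\rho)$ and the sum taken over the outcomes listed below (the outcomes relevant to $g_{XY}$). Classical-randomness scheme: a uniformly random pair of telescopes receives an entangled dual-rail photon and performs the Gottesman–Jennewein–Croke interferometric measurement; its relevant POVM elements for the pair $XY$ are $E^{\pm}_{XY}=\frac{1}{2\binom{M}{2}}|\delta_\pm\rangle\langle\delta_\pm|_{XY}\otimes\mathbb{I}_{\overline{XY}}$,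 and $F^{cr}_{XY}$ is the Fisher information matrix for $(a_{XY},b_{XY})$ from these two outcomes. Quantum-randomness scheme: before distributing the entangled photon, in each round $r=1,\dots,D$ every telescope applies the local weak measurement with Kraus operators (in the basis $|0\rangle,|1\rangle$) $M_0=\mathrm{diag}(\sqrt{1-\tau_r},1)$, $M_1=\mathrm{diag}(\sqrt{\tau_r},0)$; the pair $XY$ is selected at the first round in which $X$ and $Y$ are exactly the telescopes that have never obtained outcome $M_1$, and then the same interferometric measurement is performed on $XY$. Its relevant POVM elements are $E^{\pm}_{XY}=\frac{\gamma_D}{2}|\delta_\pm\rangle\langle\delta_\pm|_{XY}\otimes|0\cdots0\rangle\langle0\cdots0|_{\overline{XY}}$, where, with $x_0=1$ and $x_r=\prod_{j=1}^r(1-\tau_j)$, $\gamma_D=\sum_{r=1}^D x_r\left[(1-x_r)^{M-2}-(1-x_{r-1})^{M-2}\right]$; $F^{qr}_{XY}$ is the Fisher information matrix for $(a_{XY},b_{XY})$ from these two outcomes. Both Fisher informations are per distributed entangled (terrestrial) photon. *)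

(* Defs.v *)
From HB Require Import structures.
From mathcomp Require Import all_boot all_order all_algebra.
From mathcomp Require Import all_classical all_reals all_analysis.
From mathcomp Require Import complex.

Set Implicit Arguments.
Unset Strict Implicit.
Unset Printing Implicit Defensive.

Import Order.TTheory GRing.Theory Num.Theory.
Import numFieldNormedType.Exports.
Local Open Scope ring_scope.
Local Open Scope complex_scope.

Section Stellar.
Variable R : realType.
Variable M : nat.

(* Computational basis of M qubit modes: s j = true iff one photon at telescope j. *)
Definition basis := {ffun 'I_M -> bool}.

(* Operators on (C^2)^{ox M}, written as matrices in the computational basis. *)
Definition op := basis -> basis -> R[i].

Definition vac : basis := [ffun => false].
Definition e_ (j : 'I_M) : basis := [ffun k => k == j].


Definition trace_prod (A B : op) : R[i] := \sum_(s : basis) \sum_(t : basis) A s t * B t s.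

Definition density_op (rho : op) : Prop :=
  (forall s t, rho t s = conjc (rho s t)) /\
  (\sum_(s : basis) rho s s = 1) /\
  (forall v : basis -> R[i],
     0 <= \sum_(s : basis) \sum_(t : basis) conjc (v s) * rho s t * v t).

Definition rho1 (g : 'I_M -> 'I_M -> R[i]) : op := fun s t =>
  \sum_(j : 'I_M) \sum_(k : 'I_M)
    (if (s == e_ j) && (t == e_ k) then
       (if j == k then (M%:R)^-1
        else if (j < k)%N then g j k / M%:R
        else conjc (g k j) / M%:R)
     else 0).

Definition rho (eps : R) (g : 'I_M -> 'I_M -> R[i]) : op := fun s t =>
  ((1 - eps) * ((s == vac) && (t == vac))%:R)%:C + eps%:C * rho1 g s t.

Definition g_set (g : 'I_M -> 'I_M -> R[i]) (X Y : 'I_M) (a b : R) :=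
  fun j k => if (j == X) && (k == Y) then Complex a b else g j k.

Definition expi (d : R) : R[i] := Complex (cos d) (sin d).

(* amplitude <s_X s_Y | delta_pm>, sgn = true for +, false for - ;
   |01>_XY means no photon at X, one photon at Y. *)
Definition dket (X Y : 'I_M) (d : R) (sgn : bool) (s : basis) : R[i] :=
  ((Num.sqrt 2)^-1)%:C *
  (if ~~ s X && s Y then 1
   else if s X && ~~ s Y then (if sgn then 1 else -1) * expi d
   else 0).

(* |delta_pm><delta_pm|_XY (x) Id on the other telescopes *)
Definition proj_id (X Y : 'I_M) (d : R) (sgn : bool) : op := fun s t =>
  dket X Y d sgn s * conjc (dket X Y d sgn t) *
  ([forall k, ((k != X) && (k != Y)) ==> (s k == t k)])%:R.

(* |delta_pm><delta_pm|_XY (x) |0..0><0..0| on the other telescopes *)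
Definition proj_vac (X Y : 'I_M) (d : R) (sgn : bool) : op := fun s t =>
  dket X Y d sgn s * conjc (dket X Y d sgn t) *
  ([forall k, ((k != X) && (k != Y)) ==> (~~ s k && ~~ t k)])%:R.

Definition E_cr (X Y : 'I_M) (d : R) (sgn : bool) : op := fun s t =>
  ((2 * ('C(M, 2))%:R)^-1)%:C * proj_id X Y d sgn s t.

Definition xr (tau : nat -> R) (r : nat) : R := \prod_(1 <= j < r.+1) (1 - tau j).

Definition gammaD (D : nat) (tau : nat -> R) : R :=
  \sum_(1 <= r < D.+1)
    xr tau r * ((1 - xr tau r) ^+ (M - 2) - (1 - xr tau r.-1) ^+ (M - 2)).

Definition E_qr (D : nat) (tau : nat -> R) (X Y : 'I_M) (d : R) (sgn : bool) : op :=
  fun s t => (gammaD D tau / 2)%:C * proj_vac X Y d sgn s t.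

(* outcome probability p(x | a, b) = tr(E_x rho(a,b)) (real; we take its real part) *)
Definition prob (E : bool -> op) (eps : R) (g : 'I_M -> 'I_M -> R[i]) (X Y : 'I_M)
    (sgn : bool) (a b : R) : R :=
  complex.Re (trace_prod (E sgn) (rho eps (g_set g X Y a b))).

Definition dprob (E : bool -> op) eps g X Y (sgn : bool) (i : 'I_2) (a b : R) : R :=
  if i == 0 :> nat then derive1 (fun a' => prob E eps g X Y sgn a' b) a
  else derive1 (fun b' => prob E eps g X Y sgn a b') b.

Definition fisher (E : bool -> op) eps g X Y : 'M[R]_2 :=
  let a := complex.Re (g X Y) in let b := complex.Im (g X Y) in
  \matrix_(i < 2, j < 2)
    \sum_(sgn : bool) (prob E eps g X Y sgn a b)^-1 *
       dprob E eps g X Y sgn i a b * dprob E eps g X Y sgn j a b.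

Definition F_cr eps g X Y d := fisher (E_cr X Y d) eps g X Y.
Definition F_qr D tau eps g X Y d := fisher (E_qr D tau X Y d) eps g X Y.

Definition gamma_opt (D : nat) : R :=
  sup [set gammaD D tau | tau in
        [set tau : nat -> R | forall j, (1 <= j <= D)%N -> 0 <= tau j <= 1]].

End Stellar.

(* Main.v *)
Require Import Defs.
From HB Require Import structures.
From mathcomp Require Import all_boot all_order all_algebra.
From mathcomp Require Import all_classical all_reals all_analysis.
From mathcomp Require Import complex.
From mathcomp Require Import ring lra.
Import Order.TTheory GRing.Theory Num.Theory.
Import numFieldNormedType.Exports.
Local Open Scope ring_scope.
Local Open Scope complex_scope.
Local Open Scope classical_set_scope.
Section GammaA.
Variable R : realType.

Definition Gf (n : nat) (x : R) : R := - x * (1-x)^+n - (1-x)^+n.+1 / n.+1%:R.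

Lemma KI (n : nat) (u v : R) : 0 <= u -> u <= v ->
  n.+1%:R * u^+n * (v-u) <= v^+n.+1 - u^+n.+1 <= n.+1%:R * v^+n * (v-u).
Proof.
move=> u0 uv; have v0 : 0 <= v by apply: le_trans uv.
rewrite subrXX /= [(v - u) * _]mulrC; apply/andP; split.
  apply: ler_wpM2r; first by rewrite subr_ge0.
  have -> : n.+1%:R * u^+n = \sum_(i < n.+1) u^+n.
    by rewrite sumr_const card_ord mulr_natl.
  apply: ler_sum => i _.
  have -> : u^+n = u^+(n - i) * u^+i by rewrite -exprD subnK // -ltnS.
  apply: ler_wpM2r; first exact: exprn_ge0.
  by apply: lerXn2r; rewrite ?nnegrE.
apply: ler_wpM2r; first by rewrite subr_ge0.
have -> : n.+1%:R * v^+n = \sum_(i < n.+1) v^+n.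
  by rewrite sumr_const card_ord mulr_natl.
apply: ler_sum => i _.
have -> : v^+n = v^+(n - i) * v^+i by rewrite -exprD subnK // -ltnS.
apply: ler_wpM2l; first exact: exprn_ge0.
by apply: lerXn2r; rewrite ?nnegrE.
Qed.

Lemma perterm (n : nat) (x y : R) : 0 <= y -> y <= x -> x <= 1 ->
  0 <= Gf n x - Gf n y - y * ((1-y)^+n - (1-x)^+n) <=
       (x-y) * ((1-y)^+n - (1-x)^+n).
Proof.
move=> y0 yx x1.
have hu : 0 <= 1 - x by lra. have huv : 1 - x <= 1 - y by lra.
have := @KI n (1-x) (1-y) hu huv.
rewrite /Gf !exprS.
set P := (1-x)^+n; set Q := (1-y)^+n.
have N0 : 0 < n.+1%:R :> R by rewrite ltr0n.
set N := n.+1%:R => /andP[h1 h2].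
set W := ((1 - y) * Q - (1 - x) * P).
have ->: ((1 - x) * P) / N = (1-x)*P/N by [].
have e : - x * P - (1 - x) * P / N - (- y * Q - (1 - y) * Q / N) - y * (Q - P)
     = P * (y - x) + W / N.
  rewrite /W; field; by rewrite lt0r_neq0.
rewrite e.
have hw1 : P * (x - y) <= W / N.
  by rewrite ler_pdivlMr // mulrC mulrA; rewrite (_ : 1 - y - (1 - x) = x - y) in h1 => //; ring.
have hw2 : W / N <= Q * (x - y).
  by rewrite ler_pdivrMr // mulrC mulrA; rewrite (_ : 1 - y - (1 - x) = x - y) in h2 => //; ring.
set Z := W / N in hw1 hw2 *.
apply/andP; split; nra.
Qed.


Lemma xr0 (tau : nat -> R) : xr tau 0 = 1.
Proof. by rewrite /xr big_geq. Qed.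

Lemma xrS (tau : nat -> R) r : xr tau r.+1 = xr tau r * (1 - tau r.+1).
Proof. by rewrite /xr big_nat_recr. Qed.

Definition okt (D : nat) (tau : nat -> R) := forall j, (1 <= j <= D)%N -> 0 <= tau j <= 1.

Lemma xr_bnd {D tau} : okt D tau -> forall r, (r <= D)%N -> 0 <= xr tau r <= 1.
Proof.
move=> ok; elim=> [|r IH] hr; first by rewrite xr0 ler01 lexx.
have /andP[t0 t1] := ok r.+1 hr.
have /andP[x0 x1] := IH (ltnW hr).
rewrite xrS; apply/andP; split; first by apply: mulr_ge0 => //; lra.
rewrite -[1]mulr1; apply: ler_pM => //; lra.
Qed.

Lemma xr_dec {D tau} : okt D tau -> forall r, (r < D)%N -> xr tau r.+1 <= xr tau r.
Proof.
move=> ok r hr; have /andP[t0 t1] := ok r.+1 hr.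
have /andP[x0 x1] := xr_bnd ok _ (ltnW hr).
rewrite xrS; rewrite -[X in _ <= X]mulr1; apply: ler_wpM2l => //; lra.
Qed.

Definition Tm n (tau : nat -> R) r :=
  xr tau r * ((1 - xr tau r) ^+ n - (1 - xr tau r.-1) ^+ n).
Definition Er n (tau : nat -> R) r :=
  (xr tau r.-1 - xr tau r) * ((1 - xr tau r) ^+ n - (1 - xr tau r.-1) ^+ n).

Lemma main_ind n {D tau} : okt D tau -> forall D', (D' <= D)%N ->
  0 <= (Gf n 1 - Gf n (xr tau D')) - \sum_(1 <= r < D'.+1) Tm n tau r
    <= \sum_(1 <= r < D'.+1) Er n tau r.
Proof.
move=> ok; elim=> [|D' IH] hD.
  by rewrite !big_geq // xr0 subrr subr0 lexx.
rewrite [\sum_(1 <= r < D'.+2) Tm n tau r]big_nat_recr // [\sum_(1 <= r < D'.+2) Er n tau r]big_nat_recr //.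
have /andP[i1 i2] := IH (ltnW hD).
have /andP[y0 y1] := xr_bnd ok _ hD.
have /andP[x0 x1] := xr_bnd ok _ (ltnW hD).
have yx := xr_dec ok _ hD.
have /andP[p1 p2] := perterm n _ _ y0 yx x1.
rewrite /Tm /Er /= in p1 p2 *.
set S := \sum_(1 <= i < D'.+1) _ in i1 i2 *.
set S2 := \sum_(1 <= i < D'.+1) _ in i2 *.
apply/andP; split; lra.
Qed.

Lemma gammaD_le M D tau : (3 <= M)%N -> okt D tau ->
  gammaD M D tau <= (M%:R - 1)^-1.
Proof.
move=> hM ok; have /andP[h1 _] := main_ind (M-2) ok _ (leqnn D).
have /andP[y0 y1] := xr_bnd ok _ (leqnn D).
have /andP[p1 _] := perterm (M-2) _ _ (lexx 0) y0 y1.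
have e : Gf (M-2) 1 - Gf (M-2) 0 = (M%:R - 1)^-1.
  rewrite /Gf; case: (M) hM => [|[|[|m]]] // _.
  have -> : (m.+3 - 2 = m.+1)%N by [].
  rewrite subrr subr0 !expr0n /= !expr1n.
  have -> : (m.+3%:R - 1 : R) = m.+2%:R by rewrite -natr1 addrK.
  have : m.+2%:R != 0 :> R by rewrite pnatr_eq0.
  move=> h; field => //.
rewrite /gammaD.
have -> : \sum_(1 <= r < D.+1) xr tau r * ((1 - xr tau r) ^+ (M - 2) - (1 - xr tau r.-1) ^+ (M - 2))
   = \sum_(1 <= r < D.+1) Tm (M-2) tau r by [].
rewrite mul0r subr0 in p1.
lra.
Qed.

Definition tau_u (D : nat) (j : nat) : R := (D%:R - (j.-1)%:R)^-1.

Lemma okt_u D : okt D (tau_u D).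
Proof.
move=> j /andP[j1 jD]; rewrite /tau_u -natrB; last by rewrite (leq_trans (leq_pred j)).
have h : (1 <= D - j.-1)%N by rewrite subn_gt0; case: j j1 jD.
have h' : 1 <= (D - j.-1)%:R :> R by rewrite ler1n.
apply/andP; split; first by rewrite invr_ge0; lra.
by rewrite invf_le1 //; lra.
Qed.

Lemma xr_u D r : (0 < D)%N -> (r <= D)%N -> xr (tau_u D) r = 1 - r%:R / D%:R.
Proof.
move=> D0; elim: r => [|r IH] hr; first by rewrite xr0 mul0r subr0.
rewrite xrS IH ?(ltnW hr) // /tau_u /=.
have hD : D%:R != 0 :> R by rewrite pnatr_eq0 -lt0n.
have hDr : D%:R - r%:R != 0 :> R.
  by rewrite -natrB ?pnatr_eq0 -?lt0n ?subn_gt0 // ltnW.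
rewrite -natr1; field; rewrite hD hDr //.
Qed.

Lemma tel (h : nat -> R) D : \sum_(1 <= r < D.+1) (h r - h r.-1) = h D - h 0%N.
Proof.
elim: D => [|D IH]; first by rewrite big_geq // subrr.
by rewrite big_nat_recr //= IH addrC addrA subrK.
Qed.

Lemma gammaD_u M D : (3 <= M)%N -> (1 <= D)%N ->
  (M%:R - 1)^-1 - D%:R^-1 <= gammaD M D (tau_u D).
Proof.
move=> hM hD.
have ok := okt_u D.
have /andP[_ h2] := main_ind (M-2) ok _ (leqnn D).
have hD0 : D%:R != 0 :> R by rewrite pnatr_eq0 -lt0n.
have xD : xr (tau_u D) D = 0 by rewrite xr_u // divff // subrr.
have e : Gf (M-2) 1 - Gf (M-2) 0 = (M%:R - 1)^-1.
  rewrite /Gf; case: (M) hM => [|[|[|m]]] // _.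
  have -> : (m.+3 - 2 = m.+1)%N by [].
  rewrite subrr subr0 !expr0n /= !expr1n.
  have -> : (m.+3%:R - 1 : R) = m.+2%:R by rewrite -natr1 addrK.
  have : m.+2%:R != 0 :> R by rewrite pnatr_eq0.
  move=> h; field => //.
have eE : \sum_(1 <= r < D.+1) Er (M-2) (tau_u D) r = D%:R^-1.
  rewrite (eq_big_nat _ _ (F2 := fun r => D%:R^-1 *
      ((fun r => (1 - xr (tau_u D) r) ^+ (M-2)) r - (fun r => (1 - xr (tau_u D) r) ^+ (M-2)) r.-1))).
    rewrite -mulr_sumr tel xD xr0 subrr subr0 expr1n expr0n.
    by case: (M) hM => [|[|[|m]]] //= _; rewrite subr0 mulr1.
  move=> r /andP[r1 rD]; rewrite /Er.
  case: r r1 rD => // r _ rD /=.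
  have rD2 : (r <= D)%N by apply: ltnW.
  rewrite !xr_u // ?(ltnW rD2) //.
  congr (_ * _); rewrite -natr1; field => //.
rewrite xD eE e in h2.
have -> : gammaD M D (tau_u D) = \sum_(1 <= r < D.+1) Tm (M-2) (tau_u D) r by [].
lra.
Qed.

Lemma gopt_bnd M D : (3 <= M)%N -> (1 <= D)%N ->
  (M%:R - 1)^-1 - D%:R^-1 <= gamma_opt R M D <= (M%:R - 1)^-1.
Proof.
move=> hM hD; rewrite /gamma_opt.
set S := [set gammaD M D tau | tau in _].
have ne : S (gammaD M D (tau_u D)) by exists (tau_u D) => //; exact: okt_u.
have ub : ubound S (M%:R - 1)^-1.
  by move=> z [tau ok <-]; exact: gammaD_le.
apply/andP; split.
  apply: (le_trans (gammaD_u _ _ hM hD)).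
  apply: sup_upper_bound => //; split; [by exists (gammaD M D (tau_u D)) | by exists (M%:R - 1)^-1].
by apply: ge_sup => //; exists (gammaD M D (tau_u D)).
Qed.

Lemma gopt_lim M : (3 <= M)%N ->
  gamma_opt R M D @[D --> \oo] --> ((M%:R - 1)^-1 : R).
Proof.
move=> hM.
apply: (@squeeze_cvgr _ _ _ _ (fun D => (M%:R - 1)^-1 - 2 * harmonic D) (fun _ => (M%:R - 1)^-1)).
- exists 1%N => // D /= hD.
  have /andP[h1 h2] := gopt_bnd _ _ hM hD.
  rewrite h2 andbT.
  have hD' : 1 <= D%:R :> R by rewrite ler1n.
  have key : forall x : R, 1 <= x -> x^-1 <= 2 / (x + 1).
    move=> x hx; rewrite ler_pdivlMr; last by lra.
    rewrite mulrDr mulVf; last by apply/eqP; lra.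
    rewrite mulr1; have : x^-1 <= 1 by rewrite invf_le1; lra.
    lra.
  have := key _ hD'; rewrite natr1 => k.
  apply: (le_trans _ h1); rewrite lerD2l lerN2; exact: k.
- rewrite -[X in _ --> X](subr0 ((M%:R-1)^-1 : R)).
  apply: cvgB; first exact: cvg_cst.
  rewrite -[X in _ --> X](mulr0 (2:R)).
  apply: cvgMr; exact: cvg_harmonic.
- exact: cvg_cst.
Qed.

Lemma binM (M : nat) : (1 <= M)%N -> ('C(M, 2))%:R = M%:R * (M%:R - 1) / 2 :> R.
Proof.
move=> hM.
have h : (2 * 'C(M, 2) = M * 'C(M.-1, 1))%N by rewrite mul_bin_diag.
rewrite bin1 in h.
have h2 : (2 : R) * ('C(M, 2))%:R = M%:R * (M.-1)%:R by rewrite -natrM h natrM.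
have e1 : (M.-1)%:R = M%:R - 1 :> R by case: (M) hM => // m _; rewrite -natr1 addrK.
rewrite (_ : ('C(M,2))%:R = (2 * ('C(M,2))%:R) / 2 :> R); last by field.
by rewrite h2 e1.
Qed.

Lemma gopt_lim2 M : (3 <= M)%N ->
  (('C(M, 2))%:R * gamma_opt R M D) @[D --> \oo] --> (M%:R / 2 : R).
Proof.
move=> hM.
have -> : (M%:R / 2 : R) = ('C(M, 2))%:R * (M%:R - 1)^-1.
  rewrite binM ?(leq_trans _ hM) //.
  have : M%:R - 1 != 0 :> R.
    have : 3 <= M%:R :> R by rewrite (ler_nat R 3).
    move=> h; apply/eqP; lra.
  move=> h; field => //.
apply: cvgMr; exact: gopt_lim.
Qed.

End GammaA.
Section Pre.
Variable R : realType.
Implicit Types x y : R[i].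
Lemma ReM x y : complex.Re (x * y) = complex.Re x * complex.Re y - complex.Im x * complex.Im y.
Proof. by case: x y => [a b] [c d]. Qed.
Lemma ImM x y : complex.Im (x * y) = complex.Re x * complex.Im y + complex.Im x * complex.Re y.
Proof. by case: x y => [a b] [c d]. Qed.
Lemma ReD x y : complex.Re (x + y) = complex.Re x + complex.Re y.
Proof. by case: x y => [a b] [c d]. Qed.
Lemma ImD x y : complex.Im (x + y) = complex.Im x + complex.Im y.
Proof. by case: x y => [a b] [c d]. Qed.
Lemma ReN x : complex.Re (- x) = - complex.Re x. Proof. by case: x. Qed.
Lemma ImN x : complex.Im (- x) = - complex.Im x. Proof. by case: x. Qed.
Lemma ReJ x : complex.Re (conjc x) = complex.Re x. Proof. by case: x. Qed.
Lemma ImJ x : complex.Im (conjc x) = - complex.Im x. Proof. by case: x. Qed.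
Lemma ReC (r : R) : complex.Re (r%:C) = r. Proof. by []. Qed.
Lemma ImC (r : R) : complex.Im (r%:C) = 0. Proof. by []. Qed.
Lemma Re1 : complex.Re (1 : R[i]) = 1. Proof. by []. Qed.
Lemma Im1 : complex.Im (1 : R[i]) = 0. Proof. by []. Qed.
Lemma invMC (n : nat) : (n%:R : R[i])^-1 = (n%:R^-1 : R)%:C.
Proof. by rewrite -(rmorph_nat (real_complex R)) fmorphV. Qed.
End Pre.
Section Supp.
Variable R : realType.
Variable M : nat.
Implicit Types (s t : Defs.basis M) (j k X Y : 'I_M).

Lemma eE j k : (e_ j == e_ k) = (j == k).
Proof.
apply/eqP/eqP => [h|->//].
have := congr1 (fun f : Defs.basis M => f j) h; rewrite !ffunE eqxx.
by move=> /esym/eqP.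
Qed.

Lemma rho1_supp (g : 'I_M -> 'I_M -> R[i]) t s :
  rho1 g t s != 0 -> exists j k, t = e_ j /\ s = e_ k.
Proof.
move=> H; case: (pselect (exists j k, t = e_ j /\ s = e_ k)) => // hn.
exfalso; move/eqP: H; apply; rewrite /rho1 big1 // => j _; rewrite big1 // => k _.
case: ifP => // /andP[/eqP h1 /eqP h2]; exfalso; apply: hn; by exists j, k.
Qed.

Lemma rho_supp (eps : R) g t s : rho eps g t s != 0 ->
  (t = vac M /\ s = vac M) \/ exists j k, t = e_ j /\ s = e_ k.
Proof.
rewrite /rho; case: (boolP ((t == vac M) && (s == vac M))) => [/andP[/eqP-> /eqP->]|h].
  by move=> _; left.
rewrite /= mulr0 raddf0 add0r mulf_eq0 negb_or => /andP[_ H]. apply: or_intror; exact: (rho1_supp _ _ _ H).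
Qed.

Lemma dket_supp X Y (d : R) sgn s : dket X Y d sgn s != 0 -> s X != s Y.
Proof. by rewrite /dket; case: (s X); case: (s Y) => //=; rewrite mulr0 eqxx. Qed.

Lemma eXY j X Y : e_ j X != e_ j Y -> (e_ j == e_ X) || (e_ j == e_ Y).
Proof.
rewrite !ffunE !eE => h; apply/orP; case: (eqVneq j X) => [->|jX]; [by left | right].
rewrite eq_sym in jX; move: h; rewrite (negbTE jX) [j == Y]eq_sym; by case: (Y == j).
Qed.

Lemma in2 X Y s k : (s == e_ X) || (s == e_ Y) -> k != X -> k != Y -> s k = false.
Proof. by case/orP => /eqP -> kX kY; rewrite ffunE; apply/negbTE. Qed.

Lemma supp (eps : R) g X Y (d : R) sgn s t :
  dket X Y d sgn s != 0 -> dket X Y d sgn t != 0 -> rho eps g t s != 0 ->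
  ((s == e_ X) || (s == e_ Y)) && ((t == e_ X) || (t == e_ Y)).
Proof.
move=> ds dt r; case: (rho_supp _ _ _ _ r) => [[ht hs]|[j [k [ht hs]]]].
  by move: (dket_supp _ _ _ _ _ dt); rewrite ht !ffunE.
rewrite ht hs in ds dt *.
by rewrite (eXY _ _ _ (dket_supp _ _ _ _ _ ds)) (eXY _ _ _ (dket_supp _ _ _ _ _ dt)).
Qed.

Lemma vac_id (eps : R) g X Y (d : R) sgn s t :
  proj_vac X Y d sgn s t * rho eps g t s = proj_id X Y d sgn s t * rho eps g t s.
Proof.
rewrite /proj_vac /proj_id.
have [->|ds] := eqVneq (dket X Y d sgn s) 0; first by rewrite !mul0r.
have [->|dt] := eqVneq (dket X Y d sgn t) 0; first by rewrite conjc0 !mulr0 !mul0r.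
have [->|r] := eqVneq (rho eps g t s) 0; first by rewrite !mulr0.
have /andP[hs ht] := supp _ _ _ _ _ _ _ _ ds dt r.
have -> : [forall k, ((k != X) && (k != Y)) ==> (~~ s k && ~~ t k)].
  by apply/forallP => k; apply/implyP => /andP[kX kY]; rewrite (in2 _ _ _ _ hs kX kY) (in2 _ _ _ _ ht kX kY).
have -> : [forall k, ((k != X) && (k != Y)) ==> (s k == t k)].
  by apply/forallP => k; apply/implyP => /andP[kX kY]; rewrite (in2 _ _ _ _ hs kX kY) (in2 _ _ _ _ ht kX kY).
by [].
Qed.

Lemma tr_vac (eps : R) g X Y (d : R) sgn :
  trace_prod (proj_vac X Y d sgn) (rho eps g) = trace_prod (proj_id X Y d sgn) (rho eps g).
Proof. by apply: eq_bigr => s _; apply: eq_bigr => t _; apply: vac_id. Qed.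

Lemma term0 (eps : R) g X Y (d : R) sgn s t :
  ~~ (((s == e_ X) || (s == e_ Y)) && ((t == e_ X) || (t == e_ Y))) ->
  proj_id X Y d sgn s t * rho eps g t s = 0.
Proof.
move=> h; rewrite /proj_id.
have [->|ds] := eqVneq (dket X Y d sgn s) 0; first by rewrite !mul0r.
have [->|dt] := eqVneq (dket X Y d sgn t) 0; first by rewrite conjc0 !mulr0 !mul0r.
have [->|r] := eqVneq (rho eps g t s) 0; first by rewrite !mulr0.
by move: h; rewrite (supp _ _ _ _ _ _ _ _ ds dt r).
Qed.

Lemma sum2 (F : Defs.basis M -> R[i]) p q : p != q ->
  (forall s, s != p -> s != q -> F s = 0) -> \sum_s F s = F p + F q.
Proof.
move=> pq H; rewrite (bigD1 p) //= (bigD1 q) 1?eq_sym //= big1 ?addr0 ?addrA //.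
by move=> s /andP[sq sp]; apply: H.
Qed.

Lemma dsum (V : 'I_M -> 'I_M -> R[i]) j0 k0 :
  \sum_j \sum_k (if (j0 == j) && (k0 == k) then V j k else 0) = V j0 k0.
Proof.
rewrite (bigD1 j0) //= [X in _ + X]big1 ?addr0 => [|j hj]; last first.
  by apply: big1 => k _; rewrite eq_sym (negbTE hj).
rewrite (bigD1 k0) //= [X in _ + X]big1 ?addr0 => [|k hk]; last first.
  by rewrite eqxx /= eq_sym (negbTE hk).
by rewrite !eqxx.
Qed.

Lemma rho1_e (g : 'I_M -> 'I_M -> R[i]) j0 k0 : rho1 g (e_ j0) (e_ k0) =
  if j0 == k0 then (M%:R)^-1 else if (j0 < k0)%N then g j0 k0 / M%:R
  else conjc (g k0 j0) / M%:R.
Proof.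
rewrite /rho1.
under eq_bigr do under eq_bigr do rewrite !eE.
by rewrite (dsum (fun j k => if j == k then (M%:R)^-1 else if (j < k)%N then g j k / M%:R
  else conjc (g k j) / M%:R)).
Qed.

End Supp.
Arguments in2 {M X Y s k}.
Arguments term0 {R M eps g X Y d sgn s t}.
Arguments sum2 {R M F p q}.
Arguments rho1_e {R M}.
Section Trace.
Variable R : realType.
Variable M : nat.
Implicit Types (s t : Defs.basis M) (j k X Y : 'I_M).

Lemma e_vac j : (e_ j == vac M) = false.
Proof.
apply/negbTE/eqP => h; have := congr1 (fun f : Defs.basis M => f j) h.
by rewrite !ffunE eqxx.
Qed.

Lemma rho_e (eps : R) g j k : rho eps g (e_ j) (e_ k) = eps%:C * rho1 g (e_ j) (e_ k).
Proof. by rewrite /rho e_vac /= mulr0 raddf0 add0r. Qed.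

Lemma proj_id_e X Y (d : R) sgn s t : (s == e_ X) || (s == e_ Y) -> (t == e_ X) || (t == e_ Y) ->
  proj_id X Y d sgn s t = dket X Y d sgn s * conjc (dket X Y d sgn t).
Proof.
move=> hs ht; rewrite /proj_id.
have -> : [forall k, ((k != X) && (k != Y)) ==> (s k == t k)].
  by apply/forallP => k; apply/implyP => /andP[kX kY]; rewrite (in2 hs kX kY) (in2 ht kX kY).
by rewrite /= mulr1.
Qed.

Lemma tr_id (eps : R) g X Y (d : R) sgn (a b : R) : (X < Y)%N ->
  complex.Re (trace_prod (proj_id X Y d sgn) (rho eps (g_set g X Y a b)))
  = eps / M%:R * (1 + (if sgn then 1 else -1) * (a * cos d + b * sin d)).
Proof.
move=> XYl.
have XY : X != Y by rewrite neq_ltn XYl.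
have eXY : e_ Y != e_ X by rewrite eE eq_sym.
set g' := g_set g X Y a b.
have inner : forall s, (s == e_ X) || (s == e_ Y) ->
   \sum_t proj_id X Y d sgn s t * rho eps g' t s =
   proj_id X Y d sgn s (e_ Y) * rho eps g' (e_ Y) s + proj_id X Y d sgn s (e_ X) * rho eps g' (e_ X) s.
  move=> s hs; apply: sum2 => // t tY tX; apply: term0.
  by rewrite negb_and; apply/orP; right; rewrite negb_or tX tY.
rewrite /trace_prod (sum2 eXY); last first.
  move=> s sY sX; apply: big1 => t _; apply: term0.
  by rewrite negb_and; apply/orP; left; rewrite negb_or sX sY.
rewrite !inner ?eqxx ?orbT //.
rewrite !proj_id_e ?eqxx ?orbT // !rho_e !rho1_e.
have dY : dket X Y d sgn (e_ Y) = ((Num.sqrt 2)^-1)%:C * 1.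
  by rewrite /dket !ffunE eqxx (negbTE XY).
have dX : dket X Y d sgn (e_ X) = ((Num.sqrt 2)^-1)%:C * ((if sgn then 1 else -1) * expi d).
  by rewrite /dket !ffunE eqxx eq_sym (negbTE XY).
rewrite dY dX !eqxx (negbTE XY) eq_sym (negbTE XY) XYl ltnNge (ltnW XYl) /=.
have gXY : g' X Y = Complex a b by rewrite /g' /g_set !eqxx.
rewrite gXY invMC /expi.
set q := (Num.sqrt 2)^-1.
have hq : q ^+ 2 = 2^-1.
  by rewrite /q exprVn sqr_sqrtr // ler0n.
have hcs := cos2Dsin2 d.
set m := (M%:R^-1 : R).
clear inner dX dY; case: sgn => /=.
all:
  rewrite ?(ReD, ReM, ImM, ImD, ReJ, ImJ, ReC, ImC, Re1, Im1, ReN, ImN) /=.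
  apply: (@eq_trans _ _ (q^+2 * eps * m * (1 + (cos d ^+ 2 + sin d ^+ 2) + 2 * (a * cos d + b * sin d)))).
    ring.
  by rewrite hq hcs; field.
apply: (@eq_trans _ _ (q^+2 * eps * m * (1 + (cos d ^+ 2 + sin d ^+ 2) - 2 * (a * cos d + b * sin d)))).
  ring.
by rewrite hq hcs; field.
Qed.

End Trace.
Section Fish.
Variable R : realType.
Variable M : nat.

Lemma dlin (p q z : R) : derive1 (fun x => p + q * x) z = q.
Proof.
rewrite derive1E.
have h : is_derive z (1:R) (fun x => p + q * x) (0 + q * 1).
  by apply: is_deriveD.
rewrite (@derive_val _ _ _ _ _ _ _ h).
by rewrite add0r mulr1.
Qed.

Definition sv (sgn : bool) : R := if sgn then 1 else -1.
Definition cs (d : R) (k : 'I_2) : R := if k == 0 :> nat then cos d else sin d.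
Definition Amat (d r0 : R) : 'M[R]_2 :=
  \matrix_(i < 2, j < 2) (cs d i * cs d j * \sum_(sgn : bool) (1 + sv sgn * r0)^-1).

Lemma fisher_form (E : bool -> op R M) eps g X Y (d K : R) :
  (forall sgn a b, prob E eps g X Y sgn a b = K * (1 + sv sgn * (a * cos d + b * sin d))) ->
  fisher E eps g X Y = K *: Amat d (complex.Re (g X Y) * cos d + complex.Im (g X Y) * sin d).
Proof.
move=> hp.
have dp : forall sgn (k : 'I_2) a b, dprob E eps g X Y sgn k a b = K * sv sgn * cs d k.
  move=> sgn k a b; rewrite /dprob /cs; case: ifP => _.
    have -> : (fun a' => prob E eps g X Y sgn a' b) =
        (fun x => (K + K * sv sgn * (b * sin d)) + (K * sv sgn * cos d) * x).
      by apply: funext => x; rewrite hp; ring.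
    by rewrite dlin.
  have -> : (fun b' => prob E eps g X Y sgn a b') =
      (fun x => (K + K * sv sgn * (a * cos d)) + (K * sv sgn * sin d) * x).
    by apply: funext => x; rewrite hp; ring.
  by rewrite dlin.
apply/matrixP => i j; rewrite /fisher /Amat !mxE.
under eq_bigr do rewrite hp !dp.
rewrite !big_bool /sv /=.
set r0 := complex.Re (g X Y) * cos d + complex.Im (g X Y) * sin d.
have [->|K0] := eqVneq K 0; first by rewrite !(mul0r, mulr0, invr0, add0r).
rewrite !invfM.
set y1 := (1 + 1 * r0)^-1; set y2 := (1 + -1 * r0)^-1.
by field.
Qed.

End Fish.
Arguments sv {R}. Arguments cs {R}. Arguments Amat {R}.
Section Probs.
Variable R : realType.
Variable M : nat.

Lemma prob_cr (eps : R) g (X Y : 'I_M) (d : R) sgn a b : (X < Y)%N ->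
  prob (E_cr X Y d) eps g X Y sgn a b =
  ((2 * ('C(M, 2))%:R)^-1 * (eps / M%:R)) * (1 + sv sgn * (a * cos d + b * sin d)).
Proof.
move=> XY; rewrite /prob.
have -> : trace_prod (E_cr X Y d sgn) (rho eps (g_set g X Y a b)) =
    ((2 * ('C(M, 2))%:R)^-1)%:C * trace_prod (proj_id X Y d sgn) (rho eps (g_set g X Y a b)).
  rewrite /trace_prod mulr_sumr; apply: eq_bigr => s _; rewrite mulr_sumr.
  by apply: eq_bigr => t _; rewrite /E_cr mulrA.
by rewrite ReM ReC ImC mul0r subr0 tr_id // mulrA.
Qed.

Lemma prob_qr D tau (eps : R) g (X Y : 'I_M) (d : R) sgn a b : (X < Y)%N ->
  prob (E_qr D tau X Y d) eps g X Y sgn a b =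
  ((gammaD M D tau / 2) * (eps / M%:R)) * (1 + sv sgn * (a * cos d + b * sin d)).
Proof.
move=> XY; rewrite /prob.
have -> : trace_prod (E_qr D tau X Y d sgn) (rho eps (g_set g X Y a b)) =
    (gammaD M D tau / 2)%:C * trace_prod (proj_vac X Y d sgn) (rho eps (g_set g X Y a b)).
  rewrite /trace_prod mulr_sumr; apply: eq_bigr => s _; rewrite mulr_sumr.
  by apply: eq_bigr => t _; rewrite /E_qr mulrA.
by rewrite tr_vac ReM ReC ImC mul0r subr0 tr_id // mulrA.
Qed.

End Probs.

Theorem theorem1 (R : realType) (M : nat) (eps : R)
    (g : 'I_M -> 'I_M -> R[i]) (X Y : 'I_M) (delta : R) :
  (3 <= M)%N -> 0 < eps < 1 ->
  density_op (rho eps g) ->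
  (X < Y)%N ->
  `| complex.Re (g X Y * conjc (expi delta)) | < 1 ->
  (forall (D : nat) (tau : nat -> R), (1 <= D)%N ->
     (forall j, (1 <= j <= D)%N -> 0 <= tau j <= 1) ->
     0 < gammaD M D tau ->
     F_qr D tau eps g X Y delta = (('C(M, 2))%:R * gammaD M D tau) *: F_cr eps g X Y delta
     /\ F_cr eps g X Y delta != 0
     /\ `| F_qr D tau eps g X Y delta | / `| F_cr eps g X Y delta |
          = ('C(M, 2))%:R * gammaD M D tau)
  /\ (gamma_opt R M D @[D --> \oo] --> ((M%:R - 1)^-1 : R))
  /\ ((('C(M, 2))%:R * gamma_opt R M D) @[D --> \oo] --> (M%:R / 2 : R)).
Proof.
move=> hM /andP[e0 e1] _ XYl hr; split; [|split]; last first.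
- exact: gopt_lim2.
- exact: gopt_lim.
move=> D tau hD ok gpos.
set r0 := complex.Re (g X Y) * cos delta + complex.Im (g X Y) * sin delta.
set Kc := (2 * ('C(M, 2))%:R)^-1 * (eps / M%:R).
set Kq := (gammaD M D tau / 2) * (eps / M%:R).
have Fc : F_cr eps g X Y delta = Kc *: Amat delta r0.
  by apply: fisher_form => sgn a b; rewrite prob_cr.
have Fq : F_qr D tau eps g X Y delta = Kq *: Amat delta r0.
  by apply: fisher_form => sgn a b; rewrite prob_qr.
have Cpos : 0 < ('C(M, 2))%:R :> R by rewrite ltr0n bin_gt0 (leq_trans _ hM).
have Mpos : 0 < M%:R :> R by rewrite ltr0n (leq_trans _ hM).
have Kq_eq : Kq = (('C(M, 2))%:R * gammaD M D tau) * Kc.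
  rewrite /Kq /Kc; field; apply/andP; split; apply/eqP; lra.
have Kc0 : Kc != 0.
  rewrite /Kc; apply/eqP => h.
  have : 0 < (2 * ('C(M, 2))%:R)^-1 * (eps / M%:R) :> R.
    apply: mulr_gt0; first by rewrite invr_gt0; lra.
    by apply: divr_gt0.
  by rewrite h ltxx.
have er : complex.Re (g X Y * conjc (expi delta)) = r0.
  rewrite /r0 /expi; case: (g X Y) => ga gb /=; ring.
rewrite er in hr.
have /andP[r1 r2] : -1 < r0 < 1 by rewrite -ltr_norml.
have A0 : Amat delta r0 != 0.
  apply/eqP => hA.
  have := congr1 (fun A : 'M[R]_2 => A 0 0 + A 1 1) hA.
  rewrite /Amat !mxE /cs /= big_bool /sv /= addr0.
  set S := (1 + 1 * r0)^-1 + _.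
  have Sp : 0 < S by rewrite /S; apply: addr_gt0; rewrite invr_gt0; lra.
  have hcs : cos delta * cos delta + sin delta * sin delta = 1 by rewrite -!expr2 cos2Dsin2.
  have -> : cos delta * cos delta * S + sin delta * sin delta * S = 
     (cos delta * cos delta + sin delta * sin delta) * S by ring.
  rewrite hcs mul1r => hS; move: Sp; by rewrite hS ltxx.
have Fc0 : F_cr eps g X Y delta != 0 by rewrite Fc scaler_eq0 negb_or Kc0 A0.
split; first by rewrite Fq Fc Kq_eq scalerA.
split => //.
rewrite Fq Kq_eq -scalerA -Fc normrZ gtr0_norm ?mulr_gt0 //.
by rewrite mulfK // normr_eq0.
Qed.
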